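(* Let $M\ge2$ and define the $M\times M$ matrix $g_{x_1,x_2}=1$ if $x_1\ge x_2$ and $g_{x_1,x_2}=-1$ otherwise. Then the largest singular value of $g$ is $\csc(\pi/(2M))$, it is twofold degenerate, and the quantum value of $g$ equals $M\csc(\pi/(2M))$ (attained).
   Context: The quantum value is the supremum of $\sum_{x_1,x_2}g_{x_1,x_2}\operatorname{tr}(\rho\,\mathcal A_1(x_1)\otimes\mathcal A_2(x_2))$ over finite-dimensional complex Hilbert spaces $\mathcal H_1,\mathcal H_2$, density operators $\rho$ on $\mathcal H_1\otimes\mathcal H_2$ and Hermitian operators $\mathcal A_i(x_i)$ on $\mathcal H_i$ with eigenvalues in $[-1,1]$. *)

(* Defs.v *)
From Stdlib Require Import Reals Lra Lia.
Open Scope R_scope.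

Fixpoint rsum (n : nat) (f : nat -> R) : R :=
  match n with O => 0 | S m => rsum m f + f m end.

Record C : Type := mkC { Re : R ; Im : R }.
Definition RtoC (x : R) : C := mkC x 0.
Definition C0 : C := RtoC 0.
Definition Cadd (z w : C) : C := mkC (Re z + Re w) (Im z + Im w).
Definition Cmul (z w : C) : C :=
  mkC (Re z * Re w - Im z * Im w) (Re z * Im w + Im z * Re w).
Definition Cconj (z : C) : C := mkC (Re z) (- Im z).

Fixpoint csum (n : nat) (f : nat -> C) : C :=
  match n with O => C0 | S m => Cadd (csum m f) (f m) end.

(** * Matrices / operators on C^d, entries indexed by 0..d-1 *)
Definition CMat := nat -> nat -> C.
Definition CVec := nat -> C.

Definition mmul (d : nat) (A B : CMat) : CMat :=
  fun i j => csum d (fun k => Cmul (A i k) (B k j)).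
Definition mapply (d : nat) (A : CMat) (v : CVec) : CVec :=
  fun i => csum d (fun k => Cmul (A i k) (v k)).
Definition trace (d : nat) (A : CMat) : C := csum d (fun i => A i i).
Definition inner (d : nat) (v w : CVec) : C :=
  csum d (fun i => Cmul (Cconj (v i)) (w i)).

Definition hermitian (d : nat) (A : CMat) : Prop :=
  forall i j, (i < d)%nat -> (j < d)%nat -> A i j = Cconj (A j i).

Definition eigenvalue (d : nat) (A : CMat) (lam : C) : Prop :=
  exists v : CVec, (exists i, (i < d)%nat /\ v i <> C0) /\
    forall i, (i < d)%nat -> mapply d A v i = Cmul lam (v i).

Definition observable (d : nat) (A : CMat) : Prop :=
  hermitian d A /\
  forall lam, eigenvalue d A lam -> Im lam = 0 /\ -1 <= Re lam <= 1.

Definition psd (d : nat) (rho : CMat) : Prop :=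
  hermitian d rho /\
  forall v : CVec, Im (inner d v (mapply d rho v)) = 0 /\
                   0 <= Re (inner d v (mapply d rho v)).

Definition density (d : nat) (rho : CMat) : Prop :=
  psd d rho /\ trace d rho = RtoC 1.

(** Kronecker product A (x) B of A on C^d1 and B on C^d2, acting on
    C^(d1*d2) = C^d1 (x) C^d2 with basis e_a (x) e_b  |->  index a*d2 + b *)
Definition kron (d2 : nat) (A B : CMat) : CMat :=
  fun i j => Cmul (A (Nat.div i d2) (Nat.div j d2))
                  (B (Nat.modulo i d2) (Nat.modulo j d2)).

Definition achievable (M : nat) (g : nat -> nat -> R) (r : R) : Prop :=
  exists (d1 d2 : nat) (rho : CMat) (A1 A2 : nat -> CMat),
    (1 <= d1)%nat /\ (1 <= d2)%nat /\
    density (d1 * d2) rho /\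
    (forall x1, (x1 < M)%nat -> observable d1 (A1 x1)) /\
    (forall x2, (x2 < M)%nat -> observable d2 (A2 x2)) /\
    csum M (fun x1 => csum M (fun x2 =>
       Cmul (RtoC (g x1 x2))
            (trace (d1 * d2) (mmul (d1 * d2) rho (kron d2 (A1 x1) (A2 x2))))))
    = RtoC r.

Definition quantum_value (M : nat) (g : nat -> nat -> R) (q : R) : Prop :=
  is_lub (achievable M g) q.

Definition gtg (M : nat) (g : nat -> nat -> R) (i j : nat) : R :=
  rsum M (fun k => g k i * g k j).

Definition gtg_eigvec (M : nat) (g : nat -> nat -> R) (lam : R) (v : nat -> R) : Prop :=
  forall i, (i < M)%nat -> rsum M (fun k => gtg M g i k * v k) = lam * v i.

Definition singular_value (M : nat) (g : nat -> nat -> R) (sigma : R) : Prop :=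
  0 <= sigma /\
  exists v : nat -> R, (exists i, (i < M)%nat /\ v i <> 0) /\
                       gtg_eigvec M g (sigma * sigma) v.

Definition subspace_dim (M : nat) (S : (nat -> R) -> Prop) (k : nat) : Prop :=
  exists u : nat -> nat -> R,
    (forall j, (j < k)%nat -> S (u j)) /\
    (forall c : nat -> R,
        (forall i, (i < M)%nat -> rsum k (fun j => c j * u j i) = 0) ->
        forall j, (j < k)%nat -> c j = 0) /\
    (forall v, S v -> exists c : nat -> R,
        forall i, (i < M)%nat -> v i = rsum k (fun j => c j * u j i)).

(** multiplicity (degeneracy) of the singular value sigma of g: the dimension
    of the corresponding right singular subspace, i.e. of the eigenspace of
    g^T g for the eigenvalue sigma^2 *)
Definition singular_multiplicity (M : nat) (g : nat -> nat -> R) (sigma : R) (k : nat) : Prop :=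
  subspace_dim M (gtg_eigvec M g (sigma * sigma)) k.

Definition largest_singular_value (M : nat) (g : nat -> nat -> R) (sigma : R) : Prop :=
  singular_value M g sigma /\ forall s, singular_value M g s -> s <= sigma.

Definition csc (x : R) : R := / sin x.

(** the matrix of the theorem, indices x1, x2 in {0, ..., M-1} *)
Definition gM (x1 x2 : nat) : R := if Nat.leb x2 x1 then 1 else -1.

(* Main.v *)
From Stdlib Require Import Reals Lra Lia.
Require Import Defs.
Open Scope R_scope.


Definition Copp (z : C) : C := mkC (- Re z) (- Im z).
Definition C1 : C := RtoC 1.
Lemma Ceq (a b : C) : Re a = Re b -> Im a = Im b -> a = b.
Proof. destruct a, b; simpl; intros; subst; reflexivity. Qed.
Lemma Cring_th : ring_theory C0 C1 Cadd Cmul (fun a b => Cadd a (Copp b)) Copp (@eq C).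
Proof. constructor; intros; apply Ceq; simpl; ring. Qed.
Add Ring Cring : Cring_th.

Lemma Cconj_add a b : Cconj (Cadd a b) = Cadd (Cconj a) (Cconj b).
Proof. apply Ceq; simpl; ring. Qed.
Lemma Cconj_mul a b : Cconj (Cmul a b) = Cmul (Cconj a) (Cconj b).
Proof. apply Ceq; simpl; ring. Qed.
Lemma Cconj_conj a : Cconj (Cconj a) = a.
Proof. apply Ceq; simpl; ring. Qed.
Lemma Cconj_RtoC r : Cconj (RtoC r) = RtoC r.
Proof. apply Ceq; simpl; ring. Qed.
Lemma RtoC_mul a b : Cmul (RtoC a) (RtoC b) = RtoC (a * b).
Proof. apply Ceq; simpl; ring. Qed.
Lemma RtoC_add a b : Cadd (RtoC a) (RtoC b) = RtoC (a + b).
Proof. apply Ceq; simpl; ring. Qed.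
Lemma Re_mul a b : Re (Cmul a b) = Re a * Re b - Im a * Im b.
Proof. reflexivity. Qed.
Lemma Im_mul a b : Im (Cmul a b) = Re a * Im b + Im a * Re b.
Proof. reflexivity. Qed.

Lemma rsum_ext n f g : (forall i, (i < n)%nat -> f i = g i) -> rsum n f = rsum n g.
Proof. induction n; simpl; intros H; [reflexivity|]. rewrite IHn, H; auto. Qed.
Lemma rsum_add n f g : rsum n (fun i => f i + g i) = rsum n f + rsum n g.
Proof. induction n; simpl; [ring|]. rewrite IHn; ring. Qed.
Lemma rsum_scal n c f : rsum n (fun i => c * f i) = c * rsum n f.
Proof. induction n; simpl; [ring|]. rewrite IHn; ring. Qed.
Lemma rsum_exch n m F :
  rsum n (fun i => rsum m (fun j => F i j)) = rsum m (fun j => rsum n (fun i => F i j)).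
Proof.
  induction n; simpl.
  - induction m; simpl; [reflexivity|]. rewrite <- IHm; ring.
  - rewrite IHn. rewrite <- rsum_add. reflexivity.
Qed.
Lemma rsum_le n f g : (forall i, (i < n)%nat -> f i <= g i) -> rsum n f <= rsum n g.
Proof. induction n; simpl; intros H; [lra|]. pose proof (H n ltac:(lia)).
  assert (rsum n f <= rsum n g) by (apply IHn; auto). lra. Qed.
Lemma rsum_nonneg n f : (forall i, (i < n)%nat -> 0 <= f i) -> 0 <= rsum n f.
Proof. intros H. replace 0 with (rsum n (fun _ => 0)). apply rsum_le; auto.
  induction n; simpl; [auto|]. rewrite IHn; [ring|auto]. Qed.
Lemma rsum_const n c : rsum n (fun _ => c) = INR n * c.
Proof. induction n; simpl rsum; [simpl; ring|]. rewrite IHn, S_INR; ring. Qed.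
Lemma rsum_opp n f : rsum n (fun i => - f i) = - rsum n f.
Proof. induction n; simpl; [ring|]. rewrite IHn; ring. Qed.

Lemma csum_ext n f g : (forall i, (i < n)%nat -> f i = g i) -> csum n f = csum n g.
Proof. induction n; simpl; intros H; [reflexivity|]. rewrite IHn, H; auto. Qed.
Lemma csum_add n f g : csum n (fun i => Cadd (f i) (g i)) = Cadd (csum n f) (csum n g).
Proof. induction n; simpl. apply Ceq; simpl; ring. rewrite IHn; ring. Qed.
Lemma csum_scal n c f : csum n (fun i => Cmul c (f i)) = Cmul c (csum n f).
Proof. induction n; simpl. apply Ceq; simpl; ring. rewrite IHn; ring. Qed.
Lemma csum_scalr n c f : csum n (fun i => Cmul (f i) c) = Cmul (csum n f) c.
Proof. induction n; simpl. apply Ceq; simpl; ring. rewrite IHn; ring. Qed.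
Lemma csum_exch n m F :
  csum n (fun i => csum m (fun j => F i j)) = csum m (fun j => csum n (fun i => F i j)).
Proof.
  induction n; simpl.
  - induction m; simpl; [reflexivity|]. rewrite <- IHm. apply Ceq; simpl; ring.
  - rewrite IHn. rewrite <- csum_add. reflexivity.
Qed.
Lemma Re_csum n f : Re (csum n f) = rsum n (fun i => Re (f i)).
Proof. induction n; simpl; [reflexivity|]. rewrite IHn; reflexivity. Qed.
Lemma Im_csum n f : Im (csum n f) = rsum n (fun i => Im (f i)).
Proof. induction n; simpl; [reflexivity|]. rewrite IHn; reflexivity. Qed.
Lemma Cconj_csum n f : Cconj (csum n f) = csum n (fun i => Cconj (f i)).
Proof. induction n; simpl. apply Ceq; simpl; ring. rewrite Cconj_add, IHn; reflexivity. Qed.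
Lemma csum_RtoC n f : csum n (fun i => RtoC (f i)) = RtoC (rsum n f).
Proof. induction n; simpl; [reflexivity|]. rewrite IHn, RtoC_add; reflexivity. Qed.

Definition delta (i j : nat) : R := if Nat.eqb i j then 1 else 0.
Lemma csum_delta n l f : (l < n)%nat ->
  csum n (fun k => Cmul (RtoC (delta k l)) (f k)) = f l.
Proof.
  induction n; intros H; [lia|]. simpl.
  destruct (Nat.eq_dec l n) as [->|ne].
  - replace (csum n (fun k => Cmul (RtoC (delta k n)) (f k))) with C0.
    + unfold delta; rewrite Nat.eqb_refl. apply Ceq; simpl; ring.
    + clear IHn H. assert (forall n0, (n0 <= n)%nat -> C0 = csum n0 (fun k => Cmul (RtoC (delta k n)) (f k))).
      { induction n0; intros; simpl; [reflexivity|].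
        rewrite <- IHn0 by lia. unfold delta. replace (Nat.eqb n0 n) with false.
        apply Ceq; simpl; ring. symmetry; apply Nat.eqb_neq; lia. }
      apply H; lia.
  - rewrite IHn by lia. unfold delta. replace (Nat.eqb n l) with false.
    apply Ceq; simpl; ring. symmetry; apply Nat.eqb_neq; lia.
Qed.
Lemma csum_delta' n l f : (l < n)%nat ->
  csum n (fun k => Cmul (RtoC (delta l k)) (f k)) = f l.
Proof.
  intros H. rewrite <- (csum_delta n l f H). apply csum_ext; intros.
  unfold delta. rewrite Nat.eqb_sym. reflexivity.
Qed.



Definition herm_decomp_prop (n : nat) (H : CMat) : Prop :=
  exists (e : nat -> CVec) (d : nat -> R),
  (forall k i, (k < n)%nat -> (i < n)%nat ->
      mapply n H (e k) i = Cmul (RtoC (d k)) (e k i)) /\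
  (forall k l, (k < n)%nat -> (l < n)%nat ->
      inner n (e k) (e l) = RtoC (delta k l)) /\
  (forall i j, (i < n)%nat -> (j < n)%nat ->
      csum n (fun k => Cmul (e k i) (Cconj (e k j))) = RtoC (delta i j)) /\
  (forall i j, (i < n)%nat -> (j < n)%nat ->
      H i j = csum n (fun k => Cmul (RtoC (d k)) (Cmul (e k i) (Cconj (e k j))))).

Module MC.
From mathcomp Require Import all_boot all_order all_algebra.
From mathcomp Require Import Rstruct.
From mathcomp.real_closed Require Import complex.
From mathcomp Require Import sesquilinear spectral.
Import GRing.Theory Num.Theory.
Local Open Scope ring_scope.
Local Open Scope sesquilinear_scope.

Definition c2m (z : Defs.C) : R[i] := Complex (Defs.Re z) (Defs.Im z).
Definition m2c (z : R[i]) : Defs.C := Defs.mkC (complex.Re z) (complex.Im z).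

Lemma c2mK z : m2c (c2m z) = z. Proof. by case: z. Qed.
Lemma m2cK z : c2m (m2c z) = z. Proof. by case: z. Qed.
Lemma c2m_inj a b : c2m a = c2m b -> a = b.
Proof. by move=> h; rewrite -(c2mK a) h c2mK. Qed.
Lemma c2m_add a b : c2m (Cadd a b) = c2m a + c2m b. Proof. by []. Qed.
Lemma c2m_mul a b : c2m (Cmul a b) = c2m a * c2m b. Proof. by []. Qed.
Lemma c2m_conj a : c2m (Cconj a) = (c2m a)^*. Proof. by []. Qed.
Lemma c2m_RtoC r : c2m (RtoC r) = r%:C%C. Proof. by []. Qed.
Lemma c2m_csum n f : c2m (csum n f) = \sum_(i < n) c2m (f i).
Proof.
elim: n => [|n IH]; first by rewrite big_ord0.
by rewrite big_ord_recr /= c2m_add IH.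
Qed.

Lemma delta_ord (n : nat) (k l : 'I_n) : (delta k l)%:C%C = ((k == l)%:R : R[i]).
Proof.
rewrite /delta; case: (PeanoNat.Nat.eqb_spec k l) => [/val_inj ->|ne].
  by rewrite eqxx.
by have -> : (k == l) = false by apply/negP => /eqP E; apply: ne; rewrite E.
Qed.

Lemma bridge n H : Defs.hermitian n H -> herm_decomp_prop n H.
Proof.
case: n => [|m] hH.
  exists (fun _ _ => C0), (fun _ => 0%R).
  by split; [|split; [|split]] => ? ? /leP.
set A : 'M[R[i]]_m.+1 := \matrix_(i, j) c2m (H i j).
have Aherm : A \is hermsymmx.
  apply/is_hermitianmxP; rewrite expr0 scale1r; apply/matrixP => i j.
  rewrite !mxE; rewrite (hH i j) //; apply/leP; exact: ltn_ord.
have /orthomx_spectralP HA := hermitian_normalmx Aherm.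
have Preal := hermitian_spectral_diag_real Aherm.
set P := spectralmx A in HA; set sp := spectral_diag A in HA Preal.
have PU : P \is unitarymx by apply: spectral_unitarymx.
have PPt : P *m P^t* = 1%:M by apply/unitarymxP.
have iP : invmx P = P^t* by apply: invmx_unitary.
have PtP : P^t* *m P = 1%:M by rewrite -iP mulVmx // unitarymx_unit.
have spR k : ((complex.Re (sp 0 k))%:C%C) = sp 0 k.
  by apply: RRe_real; apply: (mxOverP Preal).
have AE : A *m P^t* = P^t* *m diag_mx sp.
  by rewrite {1}HA iP -!mulmxA PPt mulmx1.
exists (fun k i => m2c ((P (inord k) (inord i))^*)),
       (fun k => complex.Re (sp 0 (inord k))).
split; [|split; [|split]].
- move=> k i /leP hk /leP hi; apply: c2m_inj.
  rewrite c2m_mul c2m_RtoC m2cK spR mulrC /Defs.mapply c2m_csum.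
  have := congr1 (fun M : 'M[R[i]]_m.+1 => M (inord i) (inord k)) AE.
  rewrite mul_mx_diag !mxE => <-.
  apply: eq_bigr => j _; rewrite c2m_mul m2cK !mxE inord_val inordK //.
- move=> k l /leP hk /leP hl; apply: c2m_inj.
  rewrite c2m_RtoC /Defs.inner c2m_csum.
  have -> : (delta k l)%:C%C = (delta (@inord m k) (@inord m l))%:C%C.
    by rewrite !inordK.
  rewrite delta_ord.
  have := congr1 (fun M : 'M[R[i]]_m.+1 => M (inord k) (inord l)) PPt.
  rewrite !mxE => <-.
  apply: eq_bigr => j _; rewrite c2m_mul c2m_conj !m2cK !mxE inord_val conjCK.
  by [].
- move=> i j /leP hi /leP hj; apply: c2m_inj.
  rewrite c2m_RtoC c2m_csum.
  have -> : (delta i j)%:C%C = (delta (@inord m i) (@inord m j))%:C%C.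
    by rewrite !inordK.
  rewrite delta_ord.
  have := congr1 (fun M : 'M[R[i]]_m.+1 => M (inord i) (inord j)) PtP.
  rewrite !mxE => <-.
  apply: eq_bigr => k _; rewrite c2m_mul c2m_conj !m2cK !mxE inord_val conjCK.
  by [].
- move=> i j /leP hi /leP hj; apply: c2m_inj.
  have := congr1 (fun M : 'M[R[i]]_m.+1 => M (inord i) (inord j)) HA.
  rewrite iP mxE inordK // inordK // => ->.
  rewrite c2m_csum mxE; apply: eq_bigr => k _.
  rewrite mul_mx_diag !mxE c2m_mul c2m_RtoC spR c2m_mul c2m_conj !m2cK conjCK.
  by rewrite inord_val mulrA [_ * sp 0 k]mulrC.
Qed.
End MC.


Lemma rsum_S n f : rsum (S n) f = rsum n f + f n.
Proof. reflexivity. Qed.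

Definition G M (v : nat -> R) (k : nat) := rsum M (fun l => gM k l * v l).
Definition GT M (w : nat -> R) (j : nat) := rsum M (fun k => gM k j * w k).

Lemma gsum_row n i f : rsum n (fun l => gM i l * f l) = 2 * rsum (Nat.min n (S i)) f - rsum n f.
Proof.
  induction n; [simpl; ring|]. rewrite rsum_S, IHn. unfold gM.
  destruct (Nat.leb_spec n i).
  - replace (Nat.min (S n) (S i)) with (S n) by lia.
    replace (Nat.min n (S i)) with n by lia. rewrite !rsum_S; ring.
  - replace (Nat.min (S n) (S i)) with (S i) by lia.
    replace (Nat.min n (S i)) with (S i) by lia. rewrite !rsum_S; ring.
Qed.

Lemma gsum_col n j f : rsum n (fun k => gM k j * f k) = rsum n f - 2 * rsum (Nat.min n j) f.
Proof.
  induction n; [simpl; ring|]. rewrite rsum_S, IHn. unfold gM.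
  destruct (Nat.leb_spec j n).
  - replace (Nat.min (S n) j) with j by lia.
    replace (Nat.min n j) with j by lia. rewrite !rsum_S; ring.
  - replace (Nat.min (S n) j) with (S n) by lia.
    replace (Nat.min n j) with n by lia. rewrite !rsum_S; ring.
Qed.

Lemma G_diff M v k : (1 <= k < M)%nat -> G M v k - G M v (k-1) = 2 * v k.
Proof.
  intros H. unfold G. rewrite !gsum_row.
  replace (Nat.min M (S k)) with (S k) by lia.
  replace (Nat.min M (S (k-1))) with k by lia. simpl. ring.
Qed.

Lemma G_wrap M v : (1 <= M)%nat -> G M v 0 + G M v (M-1) = 2 * v 0%nat.
Proof.
  intros H. unfold G. rewrite !gsum_row.
  replace (Nat.min M 1) with 1%nat by lia.
  replace (Nat.min M (S (M-1))) with M by lia. simpl. ring.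
Qed.

Lemma GT_diff M w k : (k + 1 < M)%nat -> GT M w k - GT M w (k+1) = 2 * w k.
Proof.
  intros H. unfold GT. rewrite !gsum_col.
  replace (Nat.min M k) with k by lia.
  replace (Nat.min M (k+1)) with (S k) by lia. simpl. ring.
Qed.

Lemma GT_wrap M w : (1 <= M)%nat -> GT M w (M-1) + GT M w 0 = 2 * w (M-1)%nat.
Proof.
  intros H. unfold GT. rewrite !gsum_col.
  replace (Nat.min M (M-1)) with (M-1)%nat by lia.
  replace (Nat.min M 0) with 0%nat by lia.
  replace M with (S (M-1)) at 1 3 by lia. simpl. ring.
Qed.

Lemma G_inv M f w : (1 <= M)%nat ->
  (forall k, (1 <= k < M)%nat -> f k = (w k - w (k-1)%nat) / 2) ->
  f 0%nat = (w 0%nat + w (M-1)%nat) / 2 ->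
  forall i, (i < M)%nat -> G M f i = w i.
Proof.
  intros HM Hk H0 i Hi.
  assert (HP : forall m, (1 <= m <= M)%nat -> rsum m f = (w (m-1)%nat + w (M-1)%nat) / 2).
  { induction m; intros Hm; [lia|].
    destruct (Nat.eq_dec m 0) as [->|ne].
    - simpl. rewrite H0. field.
    - simpl rsum. rewrite IHm by lia. rewrite Hk by lia.
      replace (S m - 1)%nat with m by lia. field. }
  unfold G. rewrite gsum_row. replace (Nat.min M (S i)) with (S i) by lia.
  rewrite !HP by lia. replace (S i - 1)%nat with i by lia. field.
Qed.

Lemma GT_inv M f w : (1 <= M)%nat ->
  (forall k, (k + 1 < M)%nat -> f k = (w k - w (k+1)%nat) / 2) ->
  f (M-1)%nat = (w (M-1)%nat + w 0%nat) / 2 ->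
  forall j, (j < M)%nat -> GT M f j = w j.
Proof.
  intros HM Hk HL j Hj.
  assert (HP : forall m, (m <= M - 1)%nat -> rsum m f = (w 0%nat - w m) / 2).
  { induction m; intros Hm; [simpl; field|].
    simpl rsum. rewrite IHm by lia. rewrite Hk by lia.
    replace (m+1)%nat with (S m) by lia. field. }
  assert (HT : rsum M f = w 0%nat).
  { replace M with (S (M-1)) by lia. simpl rsum. rewrite HP by lia. rewrite HL. field. }
  unfold GT. rewrite gsum_col, HT. replace (Nat.min M j) with j by lia.
  rewrite HP by lia. field.
Qed.

Lemma gtg_GT M v i : rsum M (fun k => gtg M gM i k * v k) = GT M (G M v) i.
Proof.
  unfold gtg, GT, G.
  transitivity (rsum M (fun k => rsum M (fun l => gM l i * (gM l k * v k)))).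
  { apply rsum_ext; intros k Hk. rewrite (Rmult_comm _ (v k)), <- rsum_scal.
    apply rsum_ext; intros; ring. }
  rewrite rsum_exch. apply rsum_ext; intros. rewrite rsum_scal. reflexivity.
Qed.

Lemma eig_K M lam v : (2 <= M)%nat -> gtg_eigvec M gM lam v ->
  (forall i, (1 <= i)%nat -> (i + 1 < M)%nat ->
      4 * v i = lam * (2 * v i - v (i-1)%nat - v (i+1)%nat)) /\
  4 * v 0%nat = lam * (2 * v 0%nat - v 1%nat + v (M-1)%nat) /\
  4 * v (M-1)%nat = lam * (2 * v (M-1)%nat - v (M-2)%nat + v 0%nat).
Proof.
  intros HM Hv.
  set (w := G M v).
  assert (HG : forall i, (i < M)%nat -> GT M w i = lam * v i).
  { intros i Hi. unfold w. rewrite <- gtg_GT. apply Hv; auto. }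
  split; [|split].
  - intros i H1 H2.
    pose proof (G_diff M v i ltac:(lia)) as E1.
    pose proof (GT_diff M w i H2) as E2.
    pose proof (GT_diff M w (i-1) ltac:(lia)) as E3.
    replace (i - 1 + 1)%nat with i in E3 by lia.
    rewrite !HG in E2 by lia. rewrite !HG in E3 by lia. fold w in E1. nra.
  - pose proof (G_wrap M v ltac:(lia)) as E1.
    pose proof (GT_diff M w 0 ltac:(lia)) as E2.
    pose proof (GT_wrap M w ltac:(lia)) as E3.
    rewrite !HG in E2 by lia. rewrite !HG in E3 by lia. fold w in E1.
    simpl in E2. nra.
  - pose proof (G_diff M v (M-1) ltac:(lia)) as E1.
    pose proof (GT_diff M w (M-2) ltac:(lia)) as E2.
    pose proof (GT_wrap M w ltac:(lia)) as E3.
    replace (M - 2 + 1)%nat with (M-1)%nat in E2 by lia.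
    replace (M - 1 - 1)%nat with (M-2)%nat in E1 by lia.
    rewrite !HG in E2 by lia. rewrite !HG in E3 by lia. fold w in E1. nra.
Qed.


Definition th M := PI / INR M.
Definition s2 M := sin (th M / 2).
Definition sig M := csc (PI / (2 * INR M)).
Definition Uf M A B x := A * cos (x * th M) + B * sin (x * th M).
Definition Wf M A B x := (A * sin ((x + /2) * th M) - B * cos ((x + /2) * th M)) / s2 M.

Section Trig.
Variable M : nat.
Hypothesis hM : (2 <= M)%nat.

Lemma INR_M_ge2 : 2 <= INR M.
Proof. replace 2 with (INR 2) by (simpl; ring). apply le_INR; lia. Qed.
Lemma th_pos : 0 < th M.
Proof. unfold th. pose proof INR_M_ge2. pose proof PI_RGT_0. apply Rdiv_lt_0_compat; lra. Qed.
Lemma th_le : th M <= PI / 2.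
Proof. unfold th. pose proof INR_M_ge2. pose proof PI_RGT_0.
  apply Rmult_le_compat_l; [lra|]. apply Rinv_le_contravar; lra. Qed.
Lemma M_th : INR M * th M = PI.
Proof. unfold th. pose proof INR_M_ge2. field. lra. Qed.
Lemma s2_pos : 0 < s2 M.
Proof. unfold s2. pose proof th_pos. pose proof th_le. pose proof PI_RGT_0.
  apply sin_gt_0; lra. Qed.
Lemma sig_eq : sig M = / s2 M.
Proof. unfold sig, csc, s2, th. pose proof INR_M_ge2. f_equal. f_equal. field. lra. Qed.
Lemma sig_pos : 0 < sig M.
Proof. rewrite sig_eq. apply Rinv_0_lt_compat, s2_pos. Qed.
Lemma cos_th : cos (th M) = 1 - 2 * s2 M * s2 M.
Proof. unfold s2. rewrite <- cos_2a_sin. f_equal. field. Qed.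
Lemma sin_th_pos : 0 < sin (th M).
Proof. pose proof th_pos. pose proof th_le. pose proof PI_RGT_0. apply sin_gt_0; lra. Qed.

Lemma T1 A B x : Wf M A B x - Wf M A B (x - 1) = 2 * Uf M A B x.
Proof.
  unfold Wf, Uf. pose proof s2_pos. unfold s2 in *.
  replace ((x + /2) * th M) with (x * th M + th M / 2) by field.
  replace ((x - 1 + /2) * th M) with (x * th M - th M / 2) by field.
  rewrite sin_plus, sin_minus, cos_plus, cos_minus. field. lra.
Qed.

Lemma T2 A B x : Uf M A B x - Uf M A B (x + 1) = 2 * s2 M * s2 M * Wf M A B x.
Proof.
  unfold Wf, Uf. pose proof s2_pos. unfold s2 in *.
  replace (x * th M) with ((x + /2) * th M - th M / 2) by field.
  replace ((x + 1) * th M) with ((x + /2) * th M + th M / 2) by field.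
  rewrite sin_plus, sin_minus, cos_plus, cos_minus. field. lra.
Qed.

Lemma T3U A B x : Uf M A B (x + INR M) = - Uf M A B x.
Proof.
  unfold Uf. replace ((x + INR M) * th M) with (x * th M + PI).
  rewrite neg_sin, neg_cos; ring. rewrite <- M_th; ring.
Qed.
Lemma T3W A B x : Wf M A B (x + INR M) = - Wf M A B x.
Proof.
  unfold Wf. pose proof s2_pos.
  replace ((x + INR M + /2) * th M) with ((x + /2) * th M + PI).
  rewrite neg_sin, neg_cos; field; lra. rewrite <- M_th; ring.
Qed.

Lemma G_U A B : forall k, (k < M)%nat -> G M (fun j => Uf M A B (INR j)) k = Wf M A B (INR k).
Proof.
  pose proof s2_pos.
  apply G_inv; [lia| |].
  - intros k Hk. rewrite minus_INR by lia. simpl (INR 1).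
    pose proof (T1 A B (INR k)). lra.
  - rewrite minus_INR by lia. simpl (INR 1). simpl (INR 0).
    replace (INR M - 1) with (-1 + INR M) by ring. rewrite T3W.
    pose proof (T1 A B 0). replace (0 - 1) with (-1) in H0 by ring. lra.
Qed.

Lemma eigvec_U A B : gtg_eigvec M gM (sig M * sig M) (fun j => Uf M A B (INR j)).
Proof.
  intros i Hi. rewrite gtg_GT. pose proof s2_pos.
  pose proof (G_U A B) as HG.
  transitivity (GT M (fun k => Wf M A B (INR k)) i).
  { unfold GT. apply rsum_ext. intros k Hk. rewrite HG; auto. }
  apply (GT_inv M _ (fun j => sig M * sig M * Uf M A B (INR j))); [lia| | |auto].
  - intros k Hk. rewrite plus_INR. simpl (INR 1). rewrite sig_eq.
    pose proof (T2 A B (INR k)). field_simplify_eq; [|lra]. nra.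
  - rewrite sig_eq. simpl (INR 0).
    pose proof (T2 A B (INR (M-1))) as E.
    replace (INR (M-1) + 1) with (0 + INR M) in E by (rewrite minus_INR by lia; simpl; ring).
    rewrite T3U in E. field_simplify_eq; [|lra]. nra.
Qed.

Lemma F_rec a v0 B x :
  v0 * cos ((x + 1) * a) + B * sin ((x + 1) * a) =
  2 * cos a * (v0 * cos (x * a) + B * sin (x * a)) - (v0 * cos ((x - 1) * a) + B * sin ((x - 1) * a)).
Proof.
  replace ((x + 1) * a) with (x * a + a) by ring.
  replace ((x - 1) * a) with (x * a - a) by ring.
  rewrite sin_plus, sin_minus, cos_plus, cos_minus. ring.
Qed.

Lemma rec_sol a v : 0 < sin a ->
  (forall i, (1 <= i)%nat -> (i + 1 < M)%nat -> v (i+1)%nat = 2 * cos a * v i - v (i-1)%nat) ->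
  forall j, (j < M)%nat ->
  v j = v 0%nat * cos (INR j * a) + ((v 1%nat - v 0%nat * cos a) / sin a) * sin (INR j * a).
Proof.
  intros Hs Hrec.
  set (B := (v 1%nat - v 0%nat * cos a) / sin a).
  assert (Hpair : forall j, (j + 1 < M)%nat ->
     v j = v 0%nat * cos (INR j * a) + B * sin (INR j * a) /\
     v (S j) = v 0%nat * cos (INR (S j) * a) + B * sin (INR (S j) * a)).
  { induction j; intros Hj.
    - simpl INR. rewrite Rmult_0_l, cos_0, sin_0, Rmult_1_l. split; [ring|].
      unfold B. field. lra.
    - destruct (IHj ltac:(lia)) as [E1 E2]. split; [exact E2|].
      replace (S (S j)) with (S j + 1)%nat by lia.
      rewrite Hrec by lia. replace (S j - 1)%nat with j by lia.
      rewrite E2, E1. rewrite plus_INR. simpl (INR 1).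
      rewrite (F_rec a (v 0%nat) B (INR (S j))).
      replace (INR (S j) - 1) with (INR j) by (rewrite S_INR; ring). ring. }
  intros j Hj. destruct j.
  - simpl INR. rewrite Rmult_0_l, cos_0, sin_0. ring.
  - apply (Hpair j). lia.
Qed.

End Trig.


Section L.
Variable M : nat.
Hypothesis hM : (2 <= M)%nat.

Lemma sv_sig : singular_value M gM (sig M).
Proof.
  split. pose proof (sig_pos M hM); lra.
  exists (fun j => Uf M 1 0 (INR j)). split.
  - exists 0%nat. split; [lia|]. unfold Uf. simpl INR. rewrite Rmult_0_l, cos_0, sin_0. lra.
  - apply eigvec_U; auto.
Qed.

Lemma largest s : singular_value M gM s -> s <= sig M.
Proof.
  intros [Hs0 [v [[i0 [Hi0 Hvi0]] Hv]]].
  destruct (Rle_lt_dec s (sig M)) as [|Hgt]; [auto|exfalso].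
  pose proof (sig_pos M hM) as Hsp. pose proof (s2_pos M hM) as Hs2.
  pose proof (sig_eq M hM) as Hse.
  set (lam := s * s) in *.
  assert (Hlam : sig M * sig M < lam) by (unfold lam; nra).
  assert (Hlp : 0 < lam) by nra.
  destruct (eig_K M lam v hM Hv) as [Hint [Hb0 Hb1]].
  set (a := 1 - 2 / lam).
  assert (Hsl : s2 M * s2 M * lam > 1).
  { rewrite Hse in Hlam. assert (0 < s2 M * s2 M) by nra.
    apply (Rmult_lt_compat_l (s2 M * s2 M)) in Hlam; auto.
    replace (s2 M * s2 M * (/ s2 M * / s2 M)) with 1 in Hlam by (field; lra). lra. }
  pose proof (cos_th M) as Hct. pose proof (th_pos M hM). pose proof (th_le M hM).
  pose proof PI_RGT_0.
  assert (Hcth0 : 0 <= cos (th M)) by (apply cos_ge_0; lra).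
  assert (Hil : 0 < / lam) by (apply Rinv_0_lt_compat; lra).
  assert (Hil2 : / lam < s2 M * s2 M).
  { apply (Rmult_lt_reg_r lam); [lra|]. rewrite Rinv_l; lra. }
  assert (Ha1 : a < 1) by (unfold a, Rdiv; lra).
  assert (Ha2 : cos (th M) < a) by (unfold a, Rdiv; lra).
  set (al := acos a).
  assert (Hca : cos al = a) by (apply cos_acos; lra).
  pose proof (acos_bound a) as Hab. fold al in Hab.
  assert (Halt : al < th M).
  { apply cos_decreasing_0; try lra. }
  assert (Hapos : 0 < al).
  { destruct (Rle_lt_or_eq_dec 0 al) as [|E]; [lra|auto|].
    rewrite <- E, cos_0 in Hca. lra. }
  assert (Hsa : 0 < sin al) by (apply sin_gt_0; lra).
  assert (Hrec : forall i, (1 <= i)%nat -> (i + 1 < M)%nat ->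
            v (i+1)%nat = 2 * cos al * v i - v (i-1)%nat).
  { intros i Hi1 Hi2. rewrite Hca. unfold a. specialize (Hint i Hi1 Hi2).
    field_simplify_eq; [|lra]. nra. }
  pose proof (rec_sol M hM al v Hsa Hrec) as Hsol.
  set (B := (v 1%nat - v 0%nat * cos al) / sin al) in Hsol.
  set (F := fun x => v 0%nat * cos (x * al) + B * sin (x * al)).
  assert (HF : forall j, (j < M)%nat -> v j = F (INR j)) by (intros; apply Hsol; auto).
  assert (HM1 : INR (M-1) = INR M - 1) by (rewrite minus_INR by lia; simpl; ring).
  assert (HM2 : INR (M-2) = INR M - 2) by (rewrite minus_INR by lia; simpl; ring).
  assert (FR : forall x, F (x+1) = 2 * cos al * F x - F (x-1)) by (intros; unfold F; apply F_rec).
  assert (F0 : F 0 = v 0%nat) by (unfold F; rewrite Rmult_0_l, cos_0, sin_0; ring).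
  assert (F1 : F 1 = v 1%nat) by (rewrite (HF 1%nat) by lia; reflexivity).
  assert (Fm1 : F (-1) = 2 * a * v 0%nat - v 1%nat).
  { pose proof (FR 0) as E. replace (0 + 1) with 1 in E by ring.
    replace (0 - 1) with (-1) in E by ring. rewrite F0, F1, Hca in E. lra. }
  assert (E1 : F (INR M - 1) + F (-1) = 0).
  { rewrite <- HM1, <- HF by lia. rewrite Fm1.
    assert (lam * (v (M-1)%nat + (2 * a * v 0%nat - v 1%nat)) = 0).
    { unfold a. replace (lam * (v (M-1)%nat + (2 * (1 - 2 / lam) * v 0%nat - v 1%nat)))
        with (lam * v (M-1)%nat + 2 * lam * v 0%nat - 4 * v 0%nat - lam * v 1%nat) by (field; lra).
      nra. }
    destruct (Rmult_integral _ _ H2); lra. }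
  assert (E2 : F (INR M) + v 0%nat = 0).
  { pose proof (FR (INR M - 1)) as E. replace (INR M - 1 + 1) with (INR M) in E by ring.
    replace (INR M - 1 - 1) with (INR M - 2) in E by ring.
    rewrite <- HM1, <- HM2, <- (HF (M-1)%nat), <- (HF (M-2)%nat) in E by lia. rewrite E, Hca.
    assert (lam * (2 * a * v (M-1)%nat - v (M-2)%nat + v 0%nat) = 0).
    { unfold a. replace (lam * (2 * (1 - 2 / lam) * v (M-1)%nat - v (M-2)%nat + v 0%nat))
        with (2 * lam * v (M-1)%nat - 4 * v (M-1)%nat - lam * v (M-2)%nat + lam * v 0%nat) by (field; lra).
      nra. }
    destruct (Rmult_integral _ _ H2); lra. }
  assert (HMa : 0 < INR M * al < PI).
  { pose proof (INR_M_ge2 M hM). pose proof (M_th M hM) as HMt. split; [nra|].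
    rewrite <- HMt. apply Rmult_lt_compat_l; lra. }
  set (c := cos (INR M * al)) in *. set (s0 := sin (INR M * al)) in *.
  assert (Hs0p : 0 < s0) by (apply sin_gt_0; lra).
  assert (Hcs : s0 * s0 + c * c = 1).
  { pose proof (sin2_cos2 (INR M * al)) as Hsc. unfold Rsqr in Hsc. fold c s0 in Hsc. lra. }
  assert (Hc1 : 0 < 1 + c) by nra.
  unfold F in E1, E2. fold c s0 in E2.
  replace ((INR M - 1) * al) with (INR M * al - al) in E1 by ring.
  replace (-1 * al) with (- al) in E1 by ring.
  rewrite cos_minus, sin_minus, cos_neg, sin_neg in E1. fold c s0 in E1.
  set (ca := cos al) in *. set (sa := sin al) in *. set (v0 := v 0%nat) in *.
  assert (E3 : sa * (v0 * s0 - B * (1 + c)) = 0).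
  { replace (sa * (v0 * s0 - B * (1 + c))) with
      ((v0 * (c * ca + s0 * sa) + B * (s0 * ca - c * sa) + (v0 * ca + B * - sa))
       - ca * (v0 * c + B * s0 + v0)) by ring. rewrite E2. lra. }
  assert (E4 : v0 * s0 = B * (1 + c)).
  { destruct (Rmult_integral _ _ E3); lra. }
  assert (E5 : v0 * (2 + 2 * c) = 0).
  { assert (E6 : v0 * (2 + 2 * c) = (1 + c) * (v0 * c + B * s0 + v0) + s0 * (v0 * s0 - B * (1 + c))
       - v0 * (s0 * s0 + c * c - 1)) by ring.
    rewrite E2, E4, Hcs in E6. rewrite E6. ring. }
  assert (Hv0 : v0 = 0) by (destruct (Rmult_integral _ _ E5); lra).
  assert (HB : B = 0).
  { rewrite Hv0 in E4. assert (HB1 : B * (1 + c) = 0) by lra. destruct (Rmult_integral _ _ HB1); lra. }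
  apply Hvi0. rewrite (HF i0 Hi0). unfold F. fold v0. rewrite Hv0, HB. ring.
Qed.

Lemma eigvec_ext lam v w : (forall i, v i = w i) -> gtg_eigvec M gM lam v -> gtg_eigvec M gM lam w.
Proof.
  intros Heq Hv i Hi. rewrite <- Heq. rewrite <- (Hv i Hi). apply rsum_ext; intros; rewrite Heq; auto.
Qed.

Lemma mult2 : singular_multiplicity M gM (sig M) 2.
Proof.
  unfold singular_multiplicity, subspace_dim.
  pose proof (sin_th_pos M hM) as Hsth.
  exists (fun j i => match j with 0%nat => cos (INR i * th M) | _ => sin (INR i * th M) end).
  split; [|split].
  - intros j Hj. destruct j as [|[|j]]; [| |lia].
    + apply (eigvec_ext _ (fun i => Uf M 1 0 (INR i))); [intros; unfold Uf; ring|].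
      apply eigvec_U; auto.
    + apply (eigvec_ext _ (fun i => Uf M 0 1 (INR i))); [intros; unfold Uf; ring|].
      apply eigvec_U; auto.
  - intros c Hc.
    pose proof (Hc 0%nat ltac:(lia)) as H0. pose proof (Hc 1%nat ltac:(lia)) as H1.
    simpl in H0, H1. rewrite Rmult_0_l, cos_0, sin_0 in H0. rewrite Rmult_1_l in H1.
    assert (c0 : c 0%nat = 0) by lra.
    rewrite c0 in H1. assert (c1 : c 1%nat * sin (th M) = 0) by lra.
    assert (c1' : c 1%nat = 0) by (destruct (Rmult_integral _ _ c1); lra).
    intros j Hj. destruct j as [|[|j]]; [auto|auto|lia].
  - intros v Hv.
    destruct (eig_K M _ v hM Hv) as [Hint _].
    pose proof (s2_pos M hM) as Hs2. pose proof (sig_eq M hM) as Hse.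
    assert (Hrec : forall i, (1 <= i)%nat -> (i + 1 < M)%nat ->
              v (i+1)%nat = 2 * cos (th M) * v i - v (i-1)%nat).
    { intros i Hi1 Hi2. specialize (Hint i Hi1 Hi2). rewrite Hse in Hint.
      rewrite (cos_th M).
      assert (E : 4 * s2 M * s2 M * v i = 2 * v i - v (i-1)%nat - v (i+1)%nat).
      { apply (Rmult_eq_compat_l (s2 M * s2 M)) in Hint.
        replace (s2 M * s2 M * (/ s2 M * / s2 M * (2 * v i - v (i - 1)%nat - v (i + 1)%nat)))
          with (2 * v i - v (i - 1)%nat - v (i + 1)%nat) in Hint by (field; lra). lra. }
      lra. }
    pose proof (rec_sol M hM (th M) v Hsth Hrec) as Hsol.
    exists (fun j => match j with 0%nat => v 0%nat | _ => (v 1%nat - v 0%nat * cos (th M)) / sin (th M) end).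
    intros i Hi. rewrite (Hsol i Hi). simpl. ring.
Qed.
End L.


Definition obs (p q : R) : CMat := fun i j =>
  match i, j with
  | 0, 0 => RtoC p | 0, 1 => RtoC q | 1, 0 => RtoC q | 1, 1 => RtoC (- p)
  | _, _ => C0 end%nat.

Definition rhoB : CMat := fun i j =>
  if andb (orb (Nat.eqb i 0) (Nat.eqb i 3)) (orb (Nat.eqb j 0) (Nat.eqb j 3)) then RtoC (/2) else C0.

Lemma trace_obs p q p' q' :
  trace (2 * 2) (mmul (2 * 2) rhoB (kron 2 (obs p q) (obs p' q'))) = RtoC (p * p' + q * q').
Proof.
  apply Ceq; unfold trace, mmul, kron, rhoB, obs; simpl; field.
Qed.

Lemma obs_observable p q : p * p + q * q = 1 -> observable 2 (obs p q).
Proof.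
  intros Hpq. split.
  - intros i j Hi Hj. destruct i as [|[|i]]; destruct j as [|[|j]]; try lia;
      apply Ceq; simpl; ring.
  - intros lam [v [[i [Hi Hvi]] Hv]].
    pose proof (Hv 0%nat ltac:(lia)) as H0. pose proof (Hv 1%nat ltac:(lia)) as H1.
    unfold mapply in H0, H1. simpl in H0, H1.
    pose proof (f_equal Re H0) as R0. pose proof (f_equal Im H0) as I0.
    pose proof (f_equal Re H1) as R1. pose proof (f_equal Im H1) as I1.
    simpl in R0, I0, R1, I1.
    set (x0 := Re (v 0%nat)) in *. set (y0 := Im (v 0%nat)) in *.
    set (x1 := Re (v 1%nat)) in *. set (y1 := Im (v 1%nat)) in *.
    set (a := Re lam) in *. set (b := Im lam) in *.
    set (N := x0 * x0 + y0 * y0 + x1 * x1 + y1 * y1).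
    assert (HN : 0 < N).
    { assert (0 <= N) by (unfold N; nra).
      destruct (Rle_lt_or_eq_dec 0 N H) as [|E]; auto. exfalso. apply Hvi.
      assert (x0 = 0 /\ y0 = 0 /\ x1 = 0 /\ y1 = 0) as [E1 [E2 [E3 E4]]] by (unfold N in E; nra).
      destruct i as [|[|i]]; try lia; apply Ceq; simpl; auto. }
    assert (Eb : b * N = x0 * (a * y0 + b * x0 - (0 + (p * y0 + 0 * x0) + (q * y1 + 0 * x1)))
                       - y0 * (a * x0 - b * y0 - (0 + (p * x0 - 0 * y0) + (q * x1 - 0 * y1)))
                       + x1 * (a * y1 + b * x1 - (0 + (q * y0 + 0 * x0) + (- p * y1 + 0 * x1)))
                       - y1 * (a * x1 - b * y1 - (0 + (q * x0 - 0 * y0) + (- p * x1 - 0 * y1))))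
      by (unfold N; ring).
    rewrite R0, I0, R1, I1 in Eb.
    assert (Hb : b = 0).
    { assert (b * N = 0) by (rewrite Eb; ring). destruct (Rmult_integral _ _ H); lra. }
    split; [exact Hb|].
    assert (Ea : (1 - a * a) * N =
       x0 * ((p + a) * ((p * x0 + q * x1) - (a * x0 - b * y0)) + q * ((q * x0 - p * x1) - (a * x1 - b * y1)))
     + x1 * (q * ((p * x0 + q * x1) - (a * x0 - b * y0)) - (p - a) * ((q * x0 - p * x1) - (a * x1 - b * y1)))
     + y0 * ((p + a) * ((p * y0 + q * y1) - (a * y0 + b * x0)) + q * ((q * y0 - p * y1) - (a * y1 + b * x1)))
     + y1 * (q * ((p * y0 + q * y1) - (a * y0 + b * x0)) - (p - a) * ((q * y0 - p * y1) - (a * y1 + b * x1)))).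
    { rewrite Hb. unfold N. replace (1 - a * a) with (p * p + q * q - a * a) by (rewrite Hpq; ring). ring. }
    assert (Z1 : p * x0 + q * x1 - (a * x0 - b * y0) = 0) by (rewrite <- R0; ring).
    assert (Z2 : q * x0 - p * x1 - (a * x1 - b * y1) = 0) by (rewrite <- R1; ring).
    assert (Z3 : p * y0 + q * y1 - (a * y0 + b * x0) = 0) by (rewrite <- I0; ring).
    assert (Z4 : q * y0 - p * y1 - (a * y1 + b * x1) = 0) by (rewrite <- I1; ring).
    rewrite Z1, Z2, Z3, Z4 in Ea.
    assert (Ha : 1 - a * a = 0).
    { assert ((1 - a * a) * N = 0) by (rewrite Ea; ring). destruct (Rmult_integral _ _ H); lra. }
    split; nra.
Qed.

Lemma rhoB_density : density (2 * 2) rhoB.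
Proof.
  split; [split|].
  - intros i j Hi Hj. simpl in Hi, Hj.
    destruct i as [|[|[|[|i]]]]; destruct j as [|[|[|[|j]]]]; try lia;
      apply Ceq; unfold rhoB; simpl; ring.
  - intros v. unfold inner, mapply, rhoB. simpl.
    set (x0 := Re (v 0%nat)). set (y0 := Im (v 0%nat)).
    set (x3 := Re (v 3%nat)). set (y3 := Im (v 3%nat)).
    split; [ring|].
    match goal with |- 0 <= ?e => replace e with (((x0+x3)*(x0+x3) + (y0+y3)*(y0+y3))/2) by field end.
    unfold Rdiv; apply Rmult_le_pos; [apply Rplus_le_le_0_compat; apply Rle_0_sqr | apply Rlt_le, Rinv_0_lt_compat; lra].
  - apply Ceq; unfold trace, rhoB; simpl; field.
Qed.

Lemma achB M (hM : (2 <= M)%nat) : achievable M gM (INR M * sig M).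
Proof.
  exists 2%nat, 2%nat, rhoB,
    (fun x => obs (sin ((INR x + /2) * th M)) (- cos ((INR x + /2) * th M))),
    (fun y => obs (cos (INR y * th M)) (sin (INR y * th M))).
  split; [lia|]. split; [lia|]. split; [apply rhoB_density|].
  split; [intros; apply obs_observable; pose proof (sin2_cos2 ((INR x1 + /2) * th M)) as E;
          unfold Rsqr in E; lra|].
  split; [intros; apply obs_observable; pose proof (sin2_cos2 (INR x2 * th M)) as E;
          unfold Rsqr in E; lra|].
  transitivity (csum M (fun x1 => csum M (fun x2 => RtoC (gM x1 x2 *
     (sin ((INR x1 + /2) * th M) * cos (INR x2 * th M) +
      - cos ((INR x1 + /2) * th M) * sin (INR x2 * th M)))))).
  { apply csum_ext; intros; apply csum_ext; intros. rewrite trace_obs, RtoC_mul. reflexivity. }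
  transitivity (csum M (fun x1 => RtoC (rsum M (fun x2 => gM x1 x2 *
     (sin ((INR x1 + /2) * th M) * cos (INR x2 * th M) +
      - cos ((INR x1 + /2) * th M) * sin (INR x2 * th M)))))).
  { apply csum_ext; intros; apply csum_RtoC. }
  rewrite csum_RtoC. f_equal.
  pose proof (s2_pos M hM) as Hs2. rewrite (sig_eq M hM).
  rewrite <- rsum_const. apply rsum_ext. intros x Hx.
  transitivity (sin ((INR x + /2) * th M) * G M (fun j => Uf M 1 0 (INR j)) x +
                - cos ((INR x + /2) * th M) * G M (fun j => Uf M 0 1 (INR j)) x).
  { unfold G. rewrite <- !rsum_scal, <- rsum_add. apply rsum_ext. intros; unfold Uf; ring. }
  rewrite (G_U M hM 1 0 x Hx), (G_U M hM 0 1 x Hx). unfold Wf.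
  pose proof (sin2_cos2 ((INR x + /2) * th M)) as E. unfold Rsqr in E.
  set (sx := sin ((INR x + /2) * th M)) in *. set (cx := cos ((INR x + /2) * th M)) in *.
  replace (sx * ((1 * sx - 0 * cx) / s2 M) + - cx * ((0 * sx - 1 * cx) / s2 M)) with ((sx * sx + cx * cx) / s2 M) by (field; lra).
  rewrite E. field. lra.
Qed.


Definition norm2 n (v : CVec) := rsum n (fun i => Re (v i) * Re (v i) + Im (v i) * Im (v i)).

Lemma Re_inner n u w : Re (inner n u w) = rsum n (fun i => Re (u i) * Re (w i) + Im (u i) * Im (w i)).
Proof. unfold inner. rewrite Re_csum. apply rsum_ext; intros; simpl; ring. Qed.
Lemma Re_inner_self n v : Re (inner n v v) = norm2 n v.
Proof. rewrite Re_inner. reflexivity. Qed.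

Lemma norm2_nonneg n v : 0 <= norm2 n v.
Proof. apply rsum_nonneg; intros; nra. Qed.

Lemma inner_scal_r n u c w : inner n u (fun i => Cmul c (w i)) = Cmul c (inner n u w).
Proof. unfold inner. rewrite <- csum_scal. apply csum_ext; intros; ring. Qed.
Lemma inner_scal_l n u c w : inner n (fun i => Cmul c (u i)) w = Cmul (Cconj c) (inner n u w).
Proof. unfold inner. rewrite <- csum_scal. apply csum_ext; intros. rewrite Cconj_mul; ring. Qed.
Lemma inner_ext n u u' w w' : (forall i, (i < n)%nat -> u i = u' i) ->
  (forall i, (i < n)%nat -> w i = w' i) -> inner n u w = inner n u' w'.
Proof. intros H1 H2. unfold inner. apply csum_ext; intros. rewrite H1, H2; auto. Qed.

Lemma inner_herm n H u v : hermitian n H ->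
  inner n u (mapply n H v) = inner n (mapply n H u) v.
Proof.
  intros hH. unfold inner, mapply.
  transitivity (csum n (fun i => csum n (fun j => Cmul (Cconj (u i)) (Cmul (H i j) (v j))))).
  { apply csum_ext; intros. rewrite csum_scal. reflexivity. }
  rewrite csum_exch. apply csum_ext; intros j Hj.
  rewrite Cconj_csum, <- csum_scalr. apply csum_ext; intros i Hi.
  rewrite Cconj_mul, (hH i j) by auto. ring.
Qed.

Lemma csum_zero m : csum m (fun _ => C0) = C0.
Proof. induction m; simpl; [reflexivity|]. rewrite IHm. apply Ceq; simpl; ring. Qed.

Section Spec.
Variable n : nat.
Variable H : CMat.
Variable e : nat -> CVec.
Variable d : nat -> R.
Hypothesis Heig : forall k i, (k < n)%nat -> (i < n)%nat ->
      mapply n H (e k) i = Cmul (RtoC (d k)) (e k i).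
Hypothesis Horth : forall k l, (k < n)%nat -> (l < n)%nat ->
      inner n (e k) (e l) = RtoC (delta k l).
Hypothesis Hcomp : forall i j, (i < n)%nat -> (j < n)%nat ->
      csum n (fun k => Cmul (e k i) (Cconj (e k j))) = RtoC (delta i j).
Hypothesis hH : hermitian n H.

Definition coef (v : CVec) k := inner n (e k) v.

Lemma expansion v i : (i < n)%nat -> v i = csum n (fun k => Cmul (e k i) (coef v k)).
Proof.
  intros Hi. unfold coef, inner.
  transitivity (csum n (fun j => Cmul (RtoC (delta i j)) (v j))).
  { symmetry. apply csum_delta'. auto. }
  transitivity (csum n (fun j => csum n (fun k => Cmul (Cmul (e k i) (Cconj (e k j))) (v j)))).
  { apply csum_ext; intros j Hj. rewrite <- Hcomp by auto. rewrite csum_scalr. reflexivity. }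
  rewrite csum_exch. apply csum_ext; intros k Hk. rewrite <- csum_scal.
  apply csum_ext; intros; ring.
Qed.

Lemma parseval v w : inner n v w = csum n (fun k => Cmul (Cconj (coef v k)) (coef w k)).
Proof.
  unfold inner at 1.
  transitivity (csum n (fun i => Cmul (Cconj (csum n (fun k => Cmul (e k i) (coef v k)))) (w i))).
  { apply csum_ext; intros i Hi. rewrite <- expansion; auto. }
  transitivity (csum n (fun i => csum n (fun k => Cmul (Cconj (coef v k)) (Cmul (Cconj (e k i)) (w i))))).
  { apply csum_ext; intros i Hi. rewrite Cconj_csum, <- csum_scalr. apply csum_ext; intros.
    rewrite Cconj_mul. ring. }
  rewrite csum_exch. apply csum_ext; intros k Hk. rewrite csum_scal. reflexivity.
Qed.

Lemma coef_H v k : (k < n)%nat -> coef (mapply n H v) k = Cmul (RtoC (d k)) (coef v k).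
Proof.
  intros Hk. unfold coef. rewrite inner_herm by auto.
  rewrite (inner_ext n _ (fun i => Cmul (RtoC (d k)) (e k i)) v v).
  - rewrite inner_scal_l, Cconj_RtoC. reflexivity.
  - intros; apply Heig; auto.
  - auto.
Qed.

Definition cn2 (z : C) := Re z * Re z + Im z * Im z.

Lemma Re_conj_mul z : Re (Cmul (Cconj z) z) = cn2 z.
Proof. unfold cn2; simpl; ring. Qed.

Lemma norm2_spec v : norm2 n v = rsum n (fun k => cn2 (coef v k)).
Proof.
  rewrite <- Re_inner_self, parseval, Re_csum. apply rsum_ext; intros. apply Re_conj_mul.
Qed.

Lemma norm2_H_spec v : norm2 n (mapply n H v) = rsum n (fun k => d k * d k * cn2 (coef v k)).
Proof.
  rewrite <- Re_inner_self, parseval, Re_csum. apply rsum_ext; intros.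
  rewrite coef_H by auto. unfold cn2; simpl; ring.
Qed.

Lemma quad_H_spec v : Re (inner n v (mapply n H v)) = rsum n (fun k => d k * cn2 (coef v k)).
Proof.
  rewrite parseval, Re_csum. apply rsum_ext; intros.
  rewrite coef_H by auto. unfold cn2; simpl; ring.
Qed.

Lemma e_nonzero k : (k < n)%nat -> exists i, (i < n)%nat /\ e k i <> C0.
Proof.
  intros Hk. destruct (Classical_Prop.classic (exists i, (i < n)%nat /\ e k i <> C0)) as [|Hn]; auto.
  exfalso.
  assert (Hz : forall i, (i < n)%nat -> e k i = C0).
  { intros i Hi. destruct (Classical_Prop.classic (e k i = C0)); auto. exfalso; apply Hn; eauto. }
  assert (E : inner n (e k) (e k) = C0).
  { unfold inner. transitivity (csum n (fun _ => C0)).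
    - apply csum_ext; intros. rewrite Hz by auto. apply Ceq; simpl; ring.
    - apply csum_zero. }
  rewrite Horth in E by auto. unfold delta in E; rewrite Nat.eqb_refl in E.
  apply (f_equal Re) in E. simpl in E. lra.
Qed.
End Spec.


Lemma spec_pack n H : hermitian n H -> exists (e : nat -> CVec) (d : nat -> R),
  (forall v, norm2 n v = rsum n (fun k => cn2 (coef n e v k))) /\
  (forall v, norm2 n (mapply n H v) = rsum n (fun k => d k * d k * cn2 (coef n e v k))) /\
  (forall v, Re (inner n v (mapply n H v)) = rsum n (fun k => d k * cn2 (coef n e v k))) /\
  (forall k, (k < n)%nat -> eigenvalue n H (RtoC (d k))).
Proof.
  intros hH. destruct (MC.bridge n H hH) as [e [d [Heig [Horth [Hcomp _]]]]].
  exists e, d. split; [|split; [|split]].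
  - intros v. apply norm2_spec; auto.
  - intros v. eapply norm2_H_spec; eauto.
  - intros v. eapply quad_H_spec; eauto.
  - intros k Hk. exists (e k). split.
    + eapply e_nonzero; eauto.
    + intros i Hi. apply Heig; auto.
Qed.

Lemma cn2_nonneg z : 0 <= cn2 z.
Proof. unfold cn2; nra. Qed.

Lemma obs_bound n A v : observable n A -> norm2 n (mapply n A v) <= norm2 n v.
Proof.
  intros [hA hev]. destruct (spec_pack n A hA) as [e [d [P1 [P2 [_ P4]]]]].
  rewrite P2, P1. apply rsum_le. intros k Hk.
  destruct (hev _ (P4 k Hk)) as [_ Hd]. simpl in Hd.
  pose proof (cn2_nonneg (coef n e v k)).
  assert (Hdd : d k * d k <= 1) by nra.
  rewrite <- (Rmult_1_l (cn2 (coef n e v k))) at 2. apply Rmult_le_compat_r; auto.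
Qed.

Lemma sum_G_sq M b : rsum M (fun x => G M b x * G M b x) = rsum M (fun y => b y * GT M (G M b) y).
Proof.
  unfold GT at 1. unfold G at 2.
  transitivity (rsum M (fun x => rsum M (fun y => G M b x * (gM x y * b y)))).
  { apply rsum_ext; intros. rewrite rsum_scal. reflexivity. }
  rewrite rsum_exch. apply rsum_ext; intros. rewrite <- rsum_scal. apply rsum_ext; intros. ring.
Qed.

Section GB.
Variable M : nat.
Hypothesis hM : (2 <= M)%nat.

Lemma eigval_gtg_le l : eigenvalue M (fun i j => RtoC (gtg M gM i j)) (RtoC l) ->
  l <= sig M * sig M.
Proof.
  intros [v [[i [Hi Hvi]] Hv]].
  pose proof (sig_pos M hM) as Hsp.
  destruct (Rle_lt_dec l 0) as [|Hl]; [nra|].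
  assert (HR : gtg_eigvec M gM l (fun j => Re (v j))).
  { intros i' Hi'.
    assert (E' : rsum M (fun k => gtg M gM i' k * Re (v k)) = Re (mapply M (fun i j => RtoC (gtg M gM i j)) v i')).
    { unfold mapply; rewrite Re_csum; apply rsum_ext; intros; simpl; ring. }
    rewrite E', (Hv i' Hi'). simpl. ring. }
  assert (HI : gtg_eigvec M gM l (fun j => Im (v j))).
  { intros i' Hi'.
    assert (E' : rsum M (fun k => gtg M gM i' k * Im (v k)) = Im (mapply M (fun i j => RtoC (gtg M gM i j)) v i')).
    { unfold mapply; rewrite Im_csum; apply rsum_ext; intros; simpl; ring. }
    rewrite E', (Hv i' Hi'). simpl. ring. }
  assert (Hs : singular_value M gM (sqrt l)).
  { split; [apply sqrt_pos|]. rewrite sqrt_sqrt by lra.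
    destruct (Req_dec (Re (v i)) 0) as [Er|Er].
    - exists (fun j => Im (v j)). split; [|auto]. exists i. split; auto.
      intros Ei. apply Hvi. apply Ceq; simpl; auto.
    - exists (fun j => Re (v j)). split; [|auto]. exists i. split; auto. }
  pose proof (largest M hM _ Hs) as Hle.
  pose proof (sqrt_pos l). rewrite <- (sqrt_sqrt l) by lra. nra.
Qed.

Lemma gtg_bound b : rsum M (fun x => G M b x * G M b x) <= sig M * sig M * rsum M (fun y => b y * b y).
Proof.
  set (Hg := fun i j => RtoC (gtg M gM i j)).
  assert (hH : hermitian M Hg).
  { intros i j Hi Hj. unfold Hg. rewrite Cconj_RtoC. f_equal. unfold gtg.
    apply rsum_ext; intros; ring. }
  destruct (spec_pack M Hg hH) as [e [d [P1 [_ [P3 P4]]]]].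
  set (bt := fun i => RtoC (b i)).
  assert (E1 : Re (inner M bt (mapply M Hg bt)) = rsum M (fun x => G M b x * G M b x)).
  { rewrite sum_G_sq, Re_inner. apply rsum_ext; intros y Hy. unfold bt, mapply, Hg.
    rewrite Re_csum, Im_csum. simpl. rewrite <- gtg_GT.
    replace (rsum M (fun i => gtg M gM y i * b i - 0 * 0)) with (rsum M (fun k => gtg M gM y k * b k))
      by (apply rsum_ext; intros; ring). ring. }
  assert (E2 : norm2 M bt = rsum M (fun y => b y * b y)).
  { unfold norm2, bt. apply rsum_ext; intros; simpl; ring. }
  rewrite <- E1, <- E2, P3, P1, <- rsum_scal. apply rsum_le. intros k Hk.
  pose proof (eigval_gtg_le (d k) (P4 k Hk)). pose proof (cn2_nonneg (coef M e bt k)). nra.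
Qed.

Lemma scalar_S (a b : nat -> R) :
  rsum M (fun x => rsum M (fun y => gM x y * (a x * b y))) <=
  sig M / 2 * (rsum M (fun x => a x * a x) + rsum M (fun y => b y * b y)).
Proof.
  pose proof (sig_pos M hM) as Hsp.
  transitivity (rsum M (fun x => sig M / 2 * (a x * a x) + / (2 * sig M) * (G M b x * G M b x))).
  - apply rsum_le. intros x Hx.
    replace (rsum M (fun y => gM x y * (a x * b y))) with (a x * G M b x)
      by (unfold G; rewrite <- rsum_scal; apply rsum_ext; intros; ring).
    assert (0 <= (sig M * a x - G M b x) * (sig M * a x - G M b x)) by (apply Rle_0_sqr).
    assert (Hi : 0 < / (2 * sig M)) by (apply Rinv_0_lt_compat; lra).
    apply (Rmult_le_reg_l (2 * sig M)); [lra|].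
    replace (2 * sig M * (sig M / 2 * (a x * a x) + / (2 * sig M) * (G M b x * G M b x)))
      with (sig M * sig M * (a x * a x) + G M b x * G M b x) by (field; lra). nra.
  - rewrite rsum_add, !rsum_scal. pose proof (gtg_bound b).
    assert (Hi : 0 < / (2 * sig M)) by (apply Rinv_0_lt_compat; lra).
    assert (/ (2 * sig M) * rsum M (fun x => G M b x * G M b x) <=
            / (2 * sig M) * (sig M * sig M * rsum M (fun y => b y * b y))).
    { apply Rmult_le_compat_l; lra. }
    replace (/ (2 * sig M) * (sig M * sig M * rsum M (fun y => b y * b y)))
      with (sig M / 2 * rsum M (fun y => b y * b y)) in H0 by (field; lra). lra.
Qed.
End GB.


Lemma csum_app n m f : csum (n + m) f = Cadd (csum n f) (csum m (fun b => f (n + b)%nat)).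
Proof.
  induction m.
  - rewrite Nat.add_0_r. simpl. apply Ceq; simpl; ring.
  - rewrite Nat.add_succ_r. simpl. rewrite IHm. ring.
Qed.
Lemma csum_split d1 d2 f : csum (d1 * d2) f = csum d1 (fun a => csum d2 (fun b => f (a * d2 + b)%nat)).
Proof.
  induction d1; [reflexivity|].
  replace (S d1 * d2)%nat with (d1 * d2 + d2)%nat by lia.
  rewrite csum_app, IHd1. reflexivity.
Qed.
Lemma rsum_app n m f : rsum (n + m) f = rsum n f + rsum m (fun b => f (n + b)%nat).
Proof.
  induction m.
  - rewrite Nat.add_0_r. simpl. ring.
  - rewrite Nat.add_succ_r. simpl. rewrite IHm. ring.
Qed.
Lemma rsum_split d1 d2 f : rsum (d1 * d2) f = rsum d1 (fun a => rsum d2 (fun b => f (a * d2 + b)%nat)).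
Proof.
  induction d1; [reflexivity|].
  replace (S d1 * d2)%nat with (d1 * d2 + d2)%nat by lia.
  rewrite rsum_app, IHd1. reflexivity.
Qed.
Lemma rsum_exch2 n m k F :
  rsum n (fun x => rsum m (fun y => rsum k (fun b => F x y b))) =
  rsum k (fun b => rsum n (fun x => rsum m (fun y => F x y b))).
Proof.
  transitivity (rsum n (fun x => rsum k (fun b => rsum m (fun y => F x y b)))).
  { apply rsum_ext; intros. apply rsum_exch. }
  apply rsum_exch.
Qed.

Lemma divmod_ab d2 a b : (b < d2)%nat -> ((a * d2 + b) / d2 = a /\ (a * d2 + b) mod d2 = b)%nat.
Proof.
  intros Hb. split.
  - rewrite Nat.div_add_l by lia. rewrite Nat.div_small by lia. lia.
  - rewrite Nat.add_comm, Nat.Div0.mod_add. apply Nat.mod_small; auto.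
Qed.

Definition Psi d2 (psi : CVec) b : CVec := fun a => psi (a * d2 + b)%nat.
Definition Phi d2 (psi : CVec) a : CVec := fun b => psi (a * d2 + b)%nat.

Lemma inner_kron d1 d2 A B psi :
  inner (d1 * d2) psi (mapply (d1 * d2) (kron d2 A B) psi) =
  csum d2 (fun b => inner d1 (Psi d2 psi b) (mapply d1 A (fun a => mapply d2 B (Phi d2 psi a) b))).
Proof.
  unfold inner at 1. rewrite csum_split, csum_exch. apply csum_ext; intros b Hb.
  unfold inner. apply csum_ext; intros a Ha. unfold Psi. f_equal.
  unfold mapply at 1. rewrite csum_split. unfold mapply. apply csum_ext; intros a' Ha'.
  rewrite <- csum_scal. apply csum_ext; intros b' Hb'.
  unfold kron, Phi. destruct (divmod_ab d2 a b Hb) as [E1 E2].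
  destruct (divmod_ab d2 a' b' Hb') as [E3 E4]. rewrite E1, E2, E3, E4. ring.
Qed.

Section Core.
Variable M : nat.
Hypothesis hM : (2 <= M)%nat.
Variables d1 d2 : nat.
Variables A1 A2 : nat -> CMat.
Hypothesis hA1 : forall x, (x < M)%nat -> observable d1 (A1 x).
Hypothesis hA2 : forall y, (y < M)%nat -> observable d2 (A2 y).
Variable psi : CVec.

Definition Xv x b : CVec := mapply d1 (A1 x) (Psi d2 psi b).
Definition Yv y b : CVec := fun a => mapply d2 (A2 y) (Phi d2 psi a) b.

Lemma re_inner_K x y : (x < M)%nat ->
  Re (inner (d1 * d2) psi (mapply (d1 * d2) (kron d2 (A1 x) (A2 y)) psi)) =
  rsum d2 (fun b => rsum d1 (fun a => Re (Xv x b a) * Re (Yv y b a) + Im (Xv x b a) * Im (Yv y b a))).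
Proof.
  intros Hx. rewrite inner_kron, Re_csum. apply rsum_ext; intros b Hb.
  rewrite inner_herm by (destruct (hA1 x Hx); auto). rewrite Re_inner. reflexivity.
Qed.

Lemma HX x : (x < M)%nat ->
  rsum d2 (fun b => rsum d1 (fun a => cn2 (Xv x b a))) <= norm2 (d1 * d2) psi.
Proof.
  intros Hx. unfold norm2. rewrite rsum_split, (rsum_exch d1 d2).
  apply rsum_le; intros b Hb.
  change (rsum d1 (fun a => cn2 (Xv x b a))) with (norm2 d1 (Xv x b)).
  unfold Xv. eapply Rle_trans; [apply obs_bound; auto|]. right. reflexivity.
Qed.

Lemma HY y : (y < M)%nat ->
  rsum d2 (fun b => rsum d1 (fun a => cn2 (Yv y b a))) <= norm2 (d1 * d2) psi.
Proof.
  intros Hy. unfold norm2. rewrite rsum_split, (rsum_exch d2 d1).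
  apply rsum_le; intros a Ha.
  change (rsum d2 (fun b => cn2 (Yv y b a))) with (norm2 d2 (mapply d2 (A2 y) (Phi d2 psi a))).
  eapply Rle_trans; [apply obs_bound; auto|]. right. reflexivity.
Qed.

Lemma core :
  rsum M (fun x => rsum M (fun y => gM x y *
     Re (inner (d1 * d2) psi (mapply (d1 * d2) (kron d2 (A1 x) (A2 y)) psi))))
  <= INR M * sig M * norm2 (d1 * d2) psi.
Proof.
  pose proof (sig_pos M hM) as Hsp.
  transitivity (rsum d2 (fun b => rsum d1 (fun a => rsum M (fun x => rsum M (fun y =>
     gM x y * (Re (Xv x b a) * Re (Yv y b a) + Im (Xv x b a) * Im (Yv y b a))))))).
  { right.
    transitivity (rsum M (fun x => rsum M (fun y => rsum d2 (fun b => rsum d1 (fun a =>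
       gM x y * (Re (Xv x b a) * Re (Yv y b a) + Im (Xv x b a) * Im (Yv y b a))))))).
    { apply rsum_ext; intros x Hx; apply rsum_ext; intros y Hy. rewrite re_inner_K by auto.
      rewrite <- rsum_scal. apply rsum_ext; intros b Hb. rewrite <- rsum_scal. reflexivity. }
    rewrite rsum_exch2. apply rsum_ext; intros b Hb. apply rsum_exch2. }
  transitivity (rsum d2 (fun b => rsum d1 (fun a =>
     sig M / 2 * (rsum M (fun x => cn2 (Xv x b a)) + rsum M (fun y => cn2 (Yv y b a)))))).
  { apply rsum_le; intros b Hb; apply rsum_le; intros a Ha.
    pose proof (scalar_S M hM (fun x => Re (Xv x b a)) (fun y => Re (Yv y b a))) as S1.
    pose proof (scalar_S M hM (fun x => Im (Xv x b a)) (fun y => Im (Yv y b a))) as S2.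
    cbv beta in S1, S2.
    replace (rsum M (fun x => rsum M (fun y =>
       gM x y * (Re (Xv x b a) * Re (Yv y b a) + Im (Xv x b a) * Im (Yv y b a)))))
      with (rsum M (fun x => rsum M (fun y => gM x y * (Re (Xv x b a) * Re (Yv y b a)))) +
            rsum M (fun x => rsum M (fun y => gM x y * (Im (Xv x b a) * Im (Yv y b a))))).
    2:{ rewrite <- rsum_add. apply rsum_ext; intros. rewrite <- rsum_add.
        apply rsum_ext; intros. ring. }
    unfold cn2. rewrite !rsum_add. lra. }
  transitivity (sig M / 2 * (rsum M (fun x => rsum d2 (fun b => rsum d1 (fun a => cn2 (Xv x b a)))) +
                              rsum M (fun y => rsum d2 (fun b => rsum d1 (fun a => cn2 (Yv y b a)))))).
  { right. rewrite <- (rsum_exch2 d2 d1 M (fun b a x => cn2 (Xv x b a))).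
    rewrite <- (rsum_exch2 d2 d1 M (fun b a y => cn2 (Yv y b a))).
    rewrite <- rsum_add, <- rsum_scal. apply rsum_ext; intros.
    rewrite <- rsum_add, <- rsum_scal. apply rsum_ext; intros. reflexivity. }
  transitivity (sig M / 2 * (rsum M (fun _ => norm2 (d1 * d2) psi) + rsum M (fun _ => norm2 (d1 * d2) psi))).
  { apply Rmult_le_compat_l; [lra|]. apply Rplus_le_compat; apply rsum_le; intros.
    - apply HX; auto.
    - apply HY; auto. }
  rewrite rsum_const. right. field.
Qed.
End Core.


Definition Idm : CMat := fun i j => RtoC (delta i j).

Lemma trace_decomp n (rho : CMat) (e : nat -> CVec) (p : nat -> R) :
  (forall i j, (i < n)%nat -> (j < n)%nat ->
      rho i j = csum n (fun k => Cmul (RtoC (p k)) (Cmul (e k i) (Cconj (e k j))))) ->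
  forall Z, trace n (mmul n rho Z) = csum n (fun k => Cmul (RtoC (p k)) (inner n (e k) (mapply n Z (e k)))).
Proof.
  intros Hdec Z. unfold trace, mmul, inner, mapply.
  transitivity (csum n (fun i => csum n (fun j => csum n (fun k =>
      Cmul (RtoC (p k)) (Cmul (Cconj (e k j)) (Cmul (Z j i) (e k i))))))).
  { apply csum_ext; intros i Hi. apply csum_ext; intros j Hj. rewrite Hdec by auto.
    rewrite <- csum_scalr. apply csum_ext; intros. ring. }
  transitivity (csum n (fun i => csum n (fun k => csum n (fun j =>
      Cmul (RtoC (p k)) (Cmul (Cconj (e k j)) (Cmul (Z j i) (e k i))))))).
  { apply csum_ext; intros. apply csum_exch. }
  rewrite csum_exch. apply csum_ext; intros k Hk. rewrite csum_exch.
  rewrite <- csum_scal. apply csum_ext; intros j Hj. rewrite <- csum_scal, <- csum_scal.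
  apply csum_ext; intros. ring.
Qed.

Lemma qbound M (hM : (2 <= M)%nat) r : achievable M gM r -> r <= INR M * sig M.
Proof.
  intros [d1 [d2 [rho [A1 [A2 [h1 [h2 [[[hrh hps] htr] [hA1 [hA2 hv]]]]]]]]]].
  destruct (MC.bridge _ rho hrh) as [e [p [Heig [Horth [Hcomp Hdec]]]]].
  pose proof (trace_decomp _ rho e p Hdec) as Htr.
  assert (He1 : forall k, (k < d1 * d2)%nat -> inner (d1 * d2) (e k) (e k) = RtoC 1).
  { intros k Hk. rewrite Horth by auto. unfold delta. rewrite Nat.eqb_refl. reflexivity. }
  assert (Hp : forall k, (k < d1 * d2)%nat -> 0 <= p k).
  { intros k Hk. destruct (hps (e k)) as [_ Hre].
    rewrite (inner_ext _ (e k) (e k) _ (fun i => Cmul (RtoC (p k)) (e k i))) in Hre.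
    - rewrite inner_scal_r, He1 in Hre by auto. simpl in Hre. lra.
    - auto.
    - intros; apply Heig; auto. }
  assert (Hsum : rsum (d1 * d2) p = 1).
  { assert (E : trace (d1 * d2) rho = trace (d1 * d2) (mmul (d1 * d2) rho Idm)).
    { unfold trace, mmul, Idm. apply csum_ext; intros i Hi.
      rewrite <- (csum_delta (d1 * d2) i (fun k => rho i k)) at 1 by auto.
      apply csum_ext; intros. ring. }
    rewrite htr, Htr in E. apply (f_equal Re) in E. simpl in E. rewrite E, Re_csum.
    apply rsum_ext; intros k Hk.
    rewrite (inner_ext _ (e k) (e k) _ (e k)).
    - rewrite He1 by auto. simpl. ring.
    - auto.
    - intros i Hi. unfold mapply, Idm. apply csum_delta'. auto. }
  pose proof (sig_pos M hM) as Hsp.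
  apply (f_equal Re) in hv. simpl in hv. rewrite <- hv. rewrite Re_csum.
  transitivity (rsum (d1 * d2) (fun k => p k * rsum M (fun x => rsum M (fun y => gM x y *
     Re (inner (d1 * d2) (e k) (mapply (d1 * d2) (kron d2 (A1 x) (A2 y)) (e k))))))).
  { right.
    transitivity (rsum M (fun x => rsum M (fun y => rsum (d1 * d2) (fun k => p k * (gM x y *
     Re (inner (d1 * d2) (e k) (mapply (d1 * d2) (kron d2 (A1 x) (A2 y)) (e k)))))))).
    { apply rsum_ext; intros x Hx. rewrite Re_csum. apply rsum_ext; intros y Hy.
      simpl. rewrite Htr, Re_csum. rewrite <- rsum_scal.
      replace (rsum (d1 * d2) (fun k => gM x y * Re (Cmul (RtoC (p k))
         (inner (d1 * d2) (e k) (mapply (d1 * d2) (kron d2 (A1 x) (A2 y)) (e k))))))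
        with (rsum (d1 * d2) (fun k => p k * (gM x y *
         Re (inner (d1 * d2) (e k) (mapply (d1 * d2) (kron d2 (A1 x) (A2 y)) (e k))))))
        by (apply rsum_ext; intros; simpl; ring).
      ring. }
    rewrite rsum_exch2. apply rsum_ext; intros k Hk.
    rewrite <- rsum_scal. apply rsum_ext; intros. rewrite <- rsum_scal. reflexivity. }
  transitivity (rsum (d1 * d2) (fun k => p k * (INR M * sig M))).
  { apply rsum_le; intros k Hk. apply Rmult_le_compat_l; [auto|].
    eapply Rle_trans; [apply (core M hM d1 d2 A1 A2 hA1 hA2 (e k))|].
    rewrite <- Re_inner_self, He1 by auto. simpl. lra. }
  right. transitivity (rsum (d1 * d2) (fun k => (INR M * sig M) * p k)).
  { apply rsum_ext; intros; ring. }
  rewrite rsum_scal, Hsum. ring.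
Qed.


Theorem mainTheorem12 (M : nat) (hM : (2 <= M)%nat) :
  largest_singular_value M gM (csc (PI / (2 * INR M))) /\
  singular_multiplicity M gM (csc (PI / (2 * INR M))) 2 /\
  quantum_value M gM (INR M * csc (PI / (2 * INR M))) /\
  achievable M gM (INR M * csc (PI / (2 * INR M))).
Proof.
  change (csc (PI / (2 * INR M))) with (sig M).
  split; [split; [apply sv_sig; auto | apply largest; auto]|].
  split; [apply mult2; auto|].
  split; [|apply achB; auto].
  split.
  - intros r Hr. apply qbound; auto.
  - intros b Hb. apply Hb. apply achB; auto.
Qed.
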